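(* Let $p\neq 2$ be a prime and $G=Z_{p^{\lambda_1}}\times\cdots\times Z_{p^{\lambda_n}}$ with $0<\lambda_1<\cdots<\lambda_n$. Let $i\in\{1,\dots,n\}$, $j\in\{1,\dots,\lambda_i\}$, and write $J(i,j)=R(\mathbf a)$ as in its definition. Then the number of elements of $J(G)$ contained in $J(i,j)$ is $\sum_{k=1}^n a_k$.
   Context: Tuples are ordered componentwise; for $\mathbf 0\le\mathbf a\le(\lambda_1,\dots,\lambda_n)$, $T(\mathbf a)$ is the set of $(g_1,\dots,g_n)\in G$ with $|g_i|=p^{a_i}$, and $R(\mathbf a)=\bigcup_{\mathbf b\le\mathbf a}T(\mathbf b)$. For $i\in\{1,\dots,n\}$ and $j\in\{1,\dots,\lambda_i\}$, $J(i,j)=R(\mathbf a)$ where $a_k=j$ for $k\ge i$ and $a_k=\max\{0,\,j-(\lambda_i-\lambda_k)\}$ for $k<i$. $J(G)$ is the set of all $J(i,j)$, partially ordered by inclusion. *)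

(* Defs.v *)
From mathcomp Require Import all_boot all_order all_algebra all_fingroup.
Set Implicit Arguments. Unset Strict Implicit. Unset Printing Implicit Defensive.

(* Indices 1..n of the paper are represented by 'I_n (0-based). *)
Definition Gt (p n : nat) (lam : 'I_n -> nat) : finType :=
  {dffun forall k : 'I_n, 'Z_(p ^ lam k)}.

Section Defs.
Variables (p n : nat) (lam : 'I_n -> nat).

Definition Tset (a : 'I_n -> nat) : {set Gt p lam} :=
  [set g : Gt p lam | [forall k, #[g k]%g == p ^ a k]].

(* bound used to range over all tuples b with 0 <= b <= a *)
Definition bnd (a : 'I_n -> nat) : nat := (\max_(k < n) a k).+1.

Definition Rset (a : 'I_n -> nat) : {set Gt p lam} :=
  \bigcup_(b : {ffun 'I_n -> 'I_(bnd a)} | [forall k, (b k <= a k)%N])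
     Tset (fun k => nat_of_ord (b k)).

(* the tuple a defining J(i,j); truncated subtraction realizes max{0, .} *)
Definition Jvec (i : 'I_n) (j : nat) (k : 'I_n) : nat :=
  if (i <= k)%N then j else (j - (lam i - lam k))%N.

Definition Jset (i : 'I_n) (j : nat) : {set Gt p lam} := Rset (Jvec i j).

Definition JG : {set {set Gt p lam}} :=
  \bigcup_(i : 'I_n)
    [set Jset i (nat_of_ord j) | j : 'I_(\max_(k < n) lam k).+1
       & (0 < j <= lam i)%N].

End Defs.

(* Main.v *)
Require Import Defs.
From mathcomp Require Import all_boot all_order all_algebra all_fingroup all_solvable.
From mathcomp Require Import zify.
Set Implicit Arguments. Unset Strict Implicit. Unset Printing Implicit Defensive.

Section G.
Variables (p n : nat) (lam : 'I_n -> nat).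
Hypothesis pp : prime p.
Hypothesis lpos : forall k, 0 < lam k.

Lemma memR (a : 'I_n -> nat) (g : Gt p lam) :
  (g \in Rset p lam a) = [forall k, #[g k]%g %| p ^ a k].
Proof.
apply/idP/idP.
- move/bigcupP=> [b /forallP Hb]; rewrite inE => /forallP Hg.
  apply/forallP=> k; rewrite (eqP (Hg k)) dvdn_Pexp2l ?prime_gt1 //.
- move/forallP=> H.
  apply/bigcupP.
  have Hlt : forall k, logn p #[g k]%g < bnd a.
    move=> k; have /(dvdn_pfactor _ _ pp) [c Hc ->] := H k.
    rewrite pfactorK // /bnd ltnS; exact: leq_trans Hc (leq_bigmax k).
  exists [ffun k => Ordinal (Hlt k)].
    apply/forallP=> k; rewrite ffunE /=.
    have /(dvdn_pfactor _ _ pp) [c Hc ->] := H k.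
    by rewrite pfactorK.
  rewrite inE; apply/forallP=> k; rewrite ffunE /=.
  have /(dvdn_pfactor _ _ pp) [c Hc ->] := H k.
  by rewrite pfactorK.
Qed.

Lemma subR (a b : 'I_n -> nat) : (forall k, a k <= lam k) ->
  (Rset p lam a \subset Rset p lam b) = [forall k, a k <= b k].
Proof.
move=> Hal; apply/idP/idP.
- move/subsetP=> H.
  have w : forall k, {x : 'Z_(p ^ lam k) | #[x]%g = p ^ a k}.
    move=> k; exists ((Zp1 : 'Z_(p ^ lam k)) ^+ (p ^ (lam k - a k)))%g.
    have h1 : #[(Zp1 : 'Z_(p ^ lam k))]%g = p ^ lam k.
      rewrite order_Zp1 Zp_cast // (leq_trans (prime_gt1 pp)) //.
      by rewrite -{1}(expn1 p) leq_exp2l ?prime_gt1 ?lpos.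
    rewrite (orderXexp _ h1); congr (_ ^ _).
    have := Hal k; lia.
  pose g : Gt p lam := finfun (fun k => sval (w k)).
  have Hg : g \in Rset p lam a.
    rewrite memR; apply/forallP=> k; rewrite /g ffunE (svalP (w k)) //.
  have := H _ Hg; rewrite memR => /forallP Hb.
  apply/forallP=> k; have := Hb k; rewrite /g ffunE (svalP (w k)).
  by rewrite dvdn_Pexp2l ?prime_gt1.
- move/forallP=> H; apply/subsetP=> g; rewrite !memR => /forallP Hg.
  apply/forallP=> k; apply: dvdn_trans (Hg k) _.
  by rewrite dvdn_Pexp2l ?prime_gt1.
Qed.
Hypothesis mono : forall k l : 'I_n, (k < l)%N -> (lam k < lam l)%N.

Lemma monole (k l : 'I_n) : k <= l -> lam k <= lam l.
Proof.
rewrite leq_eqVlt => /orP [/eqP h|h]; last exact/ltnW/mono.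
by rewrite (val_inj h).
Qed.

Ltac cmp x y := case: (leqP x y) => [/[dup] ? /monole ? | /[dup] ? /mono ?].

Lemma Jvec_lam (i : 'I_n) j k : j <= lam i -> Jvec lam i j k <= lam k.
Proof. rewrite /Jvec; cmp i k; lia. Qed.

Lemma Jle (i k l : 'I_n) j t : j <= lam i -> 0 < t <= Jvec lam i j k ->
  Jvec lam k t l <= Jvec lam i j l.
Proof. rewrite /Jvec; cmp i k; cmp i l; cmp k l; lia. Qed.

Lemma Jinj (x1 y1 : 'I_n) x2 y2 : 0 < x2 -> 0 < y2 ->
  Jvec lam x1 x2 x1 = Jvec lam y1 y2 x1 ->
  Jvec lam x1 x2 y1 = Jvec lam y1 y2 y1 -> x1 = y1 /\ x2 = y2.
Proof.
rewrite /Jvec leqnn; cmp x1 y1; cmp y1 x1; rewrite ?leqnn => h1 h2 h3 h4;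
  (have e : x1 = y1 :> nat by lia); split; [exact: val_inj | lia | exact: val_inj | lia | exact: val_inj | lia | exact: val_inj | lia].
Qed.

Lemma sumcnt M a : \sum_(t < M.+1) (if 0 < t <= a then 1 else 0) = minn a M.
Proof.
elim: M => [|M IH]; first by rewrite big_ord_recr big_ord0 /=; lia.
rewrite big_ord_recr /= IH; case: ifP => /=; lia.
Qed.

End G.

Theorem mainTheorem18 (p n : nat) (lam : 'I_n -> nat) :
  prime p -> p != 2 ->
  (forall k : 'I_n, (0 < lam k)%N) ->
  (forall k l : 'I_n, (k < l)%N -> (lam k < lam l)%N) ->
  forall (i : 'I_n) (j : nat), (0 < j <= lam i)%N ->
  #|[set S in JG p lam | S \subset Jset p lam i j]| =
    (\sum_(k < n) Jvec lam i j k)%N.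
Proof.
move=> pp _ lpos mono i j /andP [j0 jl].
set M := (\max_(k < n) lam k).
pose a := Jvec lam i j.
pose P : {set 'I_n * 'I_M.+1} := [set x : 'I_n * 'I_M.+1 | 0 < x.2 <= a x.1].
pose f (x : 'I_n * 'I_M.+1) := Jset p lam x.1 x.2.
have -> : [set S in JG p lam | S \subset Jset p lam i j] = f @: P.
  apply/setP=> S; rewrite inE; apply/idP/idP.
  - move=> /andP [/bigcupP [i' _ /imsetP [j' /[!inE] /andP [j'0 j'l] ->]]].
    rewrite /Jset subR // => [/forallP H|k]; last exact: (Jvec_lam pp mono).
    apply/imsetP; exists (i', j') => //; rewrite inE /= j'0 /=.
    have := H i'; by rewrite /a /Jvec leqnn.
  - move=> /imsetP [[k t] /[!inE] /= /andP [t0 ta] ->]; apply/andP; split.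
      apply/bigcupP; exists k => //; apply/imsetP; exists t => //.
      rewrite inE t0 /=; apply: leq_trans ta _; exact: (Jvec_lam pp mono).
    rewrite /f /Jset /= subR // => [|l]; last first.
      apply: (Jvec_lam pp mono); apply: leq_trans ta _; exact: (Jvec_lam pp mono).
    apply/forallP => l; apply: (Jle pp mono) => //; by rewrite t0.
rewrite card_in_imset; last first.
  move=> [x1 x2] [y1 y2] /[!inE] /= /andP [x0 xa] /andP [y0 ya].
  have xl : x2 <= lam x1 by apply: leq_trans xa _; exact: (Jvec_lam pp mono).
  have yl : y2 <= lam y1 by apply: leq_trans ya _; exact: (Jvec_lam pp mono).
  rewrite /f /= => e.
  have h1 : Jset p lam x1 x2 \subset Jset p lam y1 y2 by rewrite e.
  have h2 : Jset p lam y1 y2 \subset Jset p lam x1 x2 by rewrite e.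
  move: h1 h2; rewrite /Jset !subR // => [/forallP h1 /forallP h2|k|k];
    try exact: (Jvec_lam pp mono).
  have [] := Jinj pp mono x0 y0 (_ : Jvec lam x1 x2 x1 = Jvec lam y1 y2 x1)
     (_ : Jvec lam x1 x2 y1 = Jvec lam y1 y2 y1).
  - by apply/eqP; rewrite eqn_leq h1 h2.
  - by apply/eqP; rewrite eqn_leq h1 h2.
  by move=> -> /val_inj ->.
have -> : #|P| = \sum_(k < n) \sum_(t < M.+1 | 0 < t <= a k) 1.
  rewrite pair_big_dep /= -sum1_card; apply: eq_bigl => x; by rewrite inE.
apply: eq_bigr => k _; rewrite big_mkcond /= (sumcnt pp).
have : a k <= M by apply: leq_trans (Jvec_lam pp mono k jl) (leq_bigmax k).
move=> h; rewrite /a in h *; lia.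
Qed.
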